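(* Let $N\ge2$ and let $\Theta_N\colon\tilde\Gamma_0(N)\to K_2(\mathbb{Q}(\mu_N))/Z_N$ be as below. If $N$ is divisible by two distinct primes, then $\Theta_N$ takes values in $K_2(\mathbb{Z}[\mu_N])/Z_N$. If $N$ is a prime power, then the restriction of $\Theta_N$ to $\Gamma_1(N)$ takes values in $K_2(\mathbb{Z}[\mu_N])/Z_N$.
   Context: $\zeta_N$ is a primitive $N$th root of unity; $Z_N$ is the subgroup of $K_2(\mathbb{Q}(\mu_N))$ generated by $\{-1,-\zeta_N\}$; $K_2(\mathbb{Z}[\mu_N])$ is viewed as a subgroup of $K_2(\mathbb{Q}(\mu_N))$. $\tilde\Gamma_0(N)=\{\begin{pmatrix}a&b\\c&d\end{pmatrix}\in\mathrm{GL}_2(\mathbb{Z}):N\mid c\}$ and $\Gamma_1(N)=\{\begin{pmatrix}a&b\\c&d\end{pmatrix}\in\mathrm{SL}_2(\mathbb{Z}):N\mid c,\ d\equiv1\bmod N\}$. For $\gamma=\begin{pmatrix}a&b\\c&d\end{pmatrix}\in\tilde\Gamma_0(N)$, an $N$-connecting sequence is $(b_i,d_i)\in\mathbb{Z}^2$, $0\le i\le k$, with $(b_0,d_0)=(0,1)$, $(b_k,d_k)=\det(\gamma)(b,d)$, $b_{i-1}d_i-b_id_{i-1}=1$, and $N\nmid d_i$ for $i<k$; such sequences exist, and $\Theta_{N,\gamma}=\sum_{i=1}^k\{1-\zeta_N^{d_i},1-\zeta_N^{-d_{i-1}}\}\bmod Z_N$ is independent of the choice. *)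

(* Defs.v *)
From HB Require Import structures.
From mathcomp Require Import all_boot all_order all_algebra all_field.
Set Implicit Arguments. Unset Strict Implicit. Unset Printing Implicit Defensive.
Import Order.TTheory GRing.Theory Num.Theory.
Local Open Scope ring_scope.

(* Milnor K_2 of a field L (= Quillen K_2 by Matsumoto's theorem):     *)
(* the free abelian group on symbols {a,b}, a,b in L^x, modulo the     *)
(* Steinberg relations (bimultiplicativity and {a,1-a} = 0).           *)
(* An element of the free abelian group is represented by a finite     *)
(* formal sum: a list of entries (k, a, b) standing for k*{a,b}.       *)
Section K2.
Variable L : fieldType.

Definition fsum := seq (int * L * L).

Definition fcoef (s : fsum) (a b : L) : int :=
  \sum_(e <- s | (e.1.2 == a) && (e.2 == b)) e.1.1.

Definition fscale (k : int) (s : fsum) : fsum :=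
  [seq (k * e.1.1, e.1.2, e.2) | e <- s].

Definition fsum_wf (s : fsum) : bool :=
  all (fun e => (e.1.2 != 0) && (e.2 != 0)) s.

Inductive K2rel : Type :=
  | RelMulL of L & L & L
  | RelMulR of L & L & L
  | RelSt of L.

Definition rel_fsum (r : K2rel) : fsum :=
  match r with
  | RelMulL a a' b => [:: (1, a * a', b); (-1, a, b); (-1, a', b)]
  | RelMulR a b b' => [:: (1, a, b * b'); (-1, a, b); (-1, a, b')]
  | RelSt a => [:: (1, a, 1 - a)]
  end.

Definition rel_ok (r : K2rel) : bool :=
  match r with
  | RelMulL a a' b => [&& a != 0, a' != 0 & b != 0]
  | RelMulR a b b' => [&& a != 0, b != 0 & b' != 0]
  | RelSt a => (a != 0) && (a != 1)
  end.

Definition in_steinberg (s : fsum) : Prop :=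
  exists rs : seq (int * K2rel),
    all (fun x => rel_ok x.2) rs /\
    forall a b, fcoef s a b =
      fcoef (flatten [seq fscale x.1 (rel_fsum x.2) | x <- rs]) a b.

Definition K2eq (s1 s2 : fsum) : Prop := in_steinberg (s1 ++ fscale (-1) s2).

(* For a number field L these are exactly the P-adic valuations at the *)
(* maximal ideals P of the ring of integers.                           *)
Definition is_dval (v : L -> int) : Prop :=
  (forall x y, x != 0 -> y != 0 -> v (x * y) = v x + v y) /\
  (forall x y, x != 0 -> y != 0 -> x + y != 0 -> Num.min (v x) (v y) <= v (x + y)) /\
  (exists x, x != 0 /\ v x = 1).

(* (-1)^{v(a)v(b)} a^{v(b)} / b^{v(a)}, a unit at v; its residue is the tame symbol *)
Definition tame_gen (v : L -> int) (a b : L) : L :=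
  (-1) ^ (v a * v b) * a ^ (v b) * b ^ (- v a).

Definition tame_fsum (v : L -> int) (s : fsum) : L :=
  \prod_(e <- s) tame_gen v e.1.2 e.2 ^ e.1.1.

(* the tame symbol at v of s is trivial (residue of tame_fsum is 1) *)
Definition tame_trivial (v : L -> int) (s : fsum) : bool :=
  let t := tame_fsum v s in (t == 1) || (0 < v (t - 1)).

(* s represents an element of K_2(O_L) viewed inside K_2(L), i.e. of the
   tame kernel (localization sequence; K_2 of finite fields vanishes) *)
Definition in_K2O (s : fsum) : Prop :=
  fsum_wf s /\ forall v, is_dval v -> tame_trivial v s.

(* the class of s in K_2(L)/Z_N lies in K_2(O_L)/Z_N, where Z_N is
   generated by {-1, -z} *)
Definition in_K2O_mod (z : L) (s : fsum) : Prop :=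
  exists (t : fsum) (k : int), in_K2O t /\ K2eq s (t ++ [:: (k, -1, - z)]).

End K2.

Definition in_tGamma0 (N : nat) (a b c d : int) : Prop :=
  ((a * d - b * c = 1) \/ (a * d - b * c = -1)) /\ (N%:Z %| c)%Z.

Definition in_Gamma1 (N : nat) (a b c d : int) : Prop :=
  a * d - b * c = 1 /\ (N%:Z %| c)%Z /\ (N%:Z %| d - 1)%Z.

(* s = [:: (b_0,d_0); ...; (b_k,d_k)] *)
Definition connecting_seq (N : nat) (a b c d : int) (s : seq (int * int)) : Prop :=
  exists k : nat,
    size s = k.+1 /\
    nth (0, 0) s 0 = (0, 1) /\
    nth (0, 0) s k = ((a * d - b * c) * b, (a * d - b * c) * d) /\
    (forall i : nat, (0 < i <= k)%N ->
        (nth (0, 0) s i.-1).1 * (nth (0, 0) s i).2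
        - (nth (0, 0) s i).1 * (nth (0, 0) s i.-1).2 = 1) /\
    (forall i : nat, (i < k)%N -> ~~ (N%:Z %| (nth (0, 0) s i).2)%Z).

Definition theta_fsum (L : fieldType) (z : L) (s : seq (int * int)) : fsum L :=
  [seq (1%:Z, 1 - z ^ p.2.2, 1 - z ^ (- p.1.2)) | p <- zip s (behead s)].

(* Main.v *)
Require Import Defs.
From HB Require Import structures.
From mathcomp Require Import all_boot all_order all_algebra all_field.
From mathcomp Require Import ring zify.
Set Implicit Arguments. Unset Strict Implicit. Unset Printing Implicit Defensive.
Import Order.TTheory GRing.Theory Num.Theory.
Local Open Scope ring_scope.
Section Val.
Variables (L : fieldType) (v : L -> int).
Hypothesis hv : is_dval v.

Lemma vM x y : x != 0 -> y != 0 -> v (x * y) = v x + v y.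
Proof. by case: hv => H _; apply: H. Qed.

Lemma vD x y : x != 0 -> y != 0 -> x + y != 0 -> Num.min (v x) (v y) <= v (x + y).
Proof. by case: hv => _ [H _]; apply: H. Qed.

Lemma v1 : v 1 = 0.
Proof. have h : v 1 = v 1 + v 1 by rewrite -{1}(mulr1 (1:L)) vM ?oner_neq0. lia. Qed.

Lemma vV x : x != 0 -> v x^-1 = - v x.
Proof.
move=> x0; have h : v 1 = v x + v x^-1 by rewrite -(mulfV x0) vM ?invr_neq0.
rewrite v1 in h; lia.
Qed.

Lemma vN1 : v (-1) = 0.
Proof.
have n1: (-1 : L) != 0 by rewrite oppr_eq0 oner_neq0.
have h : v 1 = v (-1) + v (-1) by rewrite -vM // mulrNN mulr1.
rewrite v1 in h; lia.
Qed.

Lemma vN x : x != 0 -> v (- x) = v x.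
Proof.
move=> x0; rewrite -mulN1r vM ?vN1 ?add0r //; by rewrite oppr_eq0 oner_neq0.
Qed.

Lemma vXn x n : x != 0 -> v (x ^+ n) = (n%:Z * v x).
Proof.
move=> x0; elim: n => [|n IH]; first by rewrite expr0 v1 mul0r.
by rewrite exprS vM ?expf_neq0 // IH intS mulrDl mul1r.
Qed.

Lemma vXz x (n : int) : x != 0 -> v (x ^ n) = n * v x.
Proof.
move=> x0; case: n => n; first by rewrite vXn.
by rewrite NegzE -exprnN vV ?expf_neq0 // vXn // mulNr.
Qed.

Definition small x := (x == 0) || (0 < v x).
Definition intg x := (x == 0) || (0 <= v x).

Lemma small0 : small 0. Proof. by rewrite /small eqxx. Qed.
Lemma intg0 : intg 0. Proof. by rewrite /intg eqxx. Qed.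
Lemma intg1 : intg 1. Proof. by rewrite /intg v1 lexx orbT. Qed.
Lemma small1 : ~~ small 1. Proof. by rewrite /small oner_eq0 v1 ltxx. Qed.
Lemma small_intg x : small x -> intg x.
Proof. by rewrite /small /intg => /orP[->|/ltW ->]; rewrite ?orbT. Qed.

Lemma intgD x y : intg x -> intg y -> intg (x + y).
Proof.
rewrite /intg; have [->|x0] := eqVneq x 0; first by move=> _ hy; rewrite add0r.
have [->|y0] := eqVneq y 0; first by move=> hx _; rewrite addr0 (negPf x0).
have [->|s0] := eqVneq (x + y) 0; first by [].
move=> /= hx hy.
have := vD x0 y0 s0; apply: le_trans; rewrite /Num.min; by case: ifP.
Qed.

Lemma smallD x y : small x -> small y -> small (x + y).
Proof.
rewrite /small; have [->|x0] := eqVneq x 0; first by move=> _ hy; rewrite add0r.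
have [->|y0] := eqVneq y 0; first by move=> hx _; rewrite addr0 (negPf x0).
have [->|s0] := eqVneq (x + y) 0; first by [].
move=> /= hx hy.
have := vD x0 y0 s0; apply: lt_le_trans; rewrite /Num.min; by case: ifP.
Qed.

Lemma intgN x : intg x = intg (- x).
Proof.
rewrite /intg oppr_eq0; have [//|x0] := eqVneq x 0; by rewrite vN.
Qed.

Lemma smallN x : small x = small (- x).
Proof.
rewrite /small oppr_eq0; have [//|x0] := eqVneq x 0; by rewrite vN.
Qed.

Lemma intgB x y : intg x -> intg y -> intg (x - y).
Proof. by move=> hx hy; apply: intgD => //; rewrite -intgN. Qed.

Lemma smallB x y : small x -> small y -> small (x - y).
Proof. by move=> hx hy; apply: smallD => //; rewrite -smallN. Qed.

Lemma intgM x y : intg x -> intg y -> intg (x * y).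
Proof.
rewrite /intg; have [->|x0] := eqVneq x 0; first by rewrite mul0r eqxx.
have [->|y0] := eqVneq y 0; first by rewrite mulr0 eqxx.
rewrite mulf_eq0 (negPf x0) (negPf y0) /= vM // => hx hy; exact: addr_ge0.
Qed.

Lemma smallMl x y : intg x -> small y -> small (x * y).
Proof.
rewrite /intg /small; have [->|x0] := eqVneq x 0; first by rewrite mul0r eqxx.
have [->|y0] := eqVneq y 0; first by rewrite mulr0 eqxx.
rewrite mulf_eq0 (negPf x0) (negPf y0) /= vM // => hx hy; lia.
Qed.

Lemma smallMr x y : small x -> intg y -> small (x * y).
Proof. by move=> hx hy; rewrite mulrC smallMl. Qed.

Lemma intg_nat n : intg n%:R.
Proof. by elim: n => [|n IH]; rewrite ?intg0 // -addn1 natrD intgD ?intg1. Qed.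

Lemma intg_int (n : int) : intg n%:~R.
Proof. by case: n => n; rewrite ?NegzE ?mulrNz -?intgN intg_nat. Qed.

Lemma intgX x n : intg x -> intg (x ^+ n).
Proof. by move=> hx; elim: n => [|n IH]; rewrite ?expr0 ?intg1 // exprS intgM. Qed.

Lemma small_sum (I : Type) (r : seq I) (F : I -> L) :
  (forall i, small (F i)) -> small (\sum_(i <- r) F i).
Proof. by move=> h; elim: r => [|i r IH]; rewrite ?big_nil ?small0 // big_cons smallD. Qed.

Lemma intg_sum (I : Type) (r : seq I) (F : I -> L) :
  (forall i, intg (F i)) -> intg (\sum_(i <- r) F i).
Proof. by move=> h; elim: r => [|i r IH]; rewrite ?big_nil ?intg0 // big_cons intgD. Qed.

Lemma smallE x : x != 0 -> small x = (0 < v x).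
Proof. by rewrite /small => /negPf ->. Qed.
Lemma intgE x : x != 0 -> intg x = (0 <= v x).
Proof. by rewrite /intg => /negPf ->. Qed.

Lemma unit_v0 x : intg x -> ~~ small x -> x != 0 /\ v x = 0.
Proof.
rewrite /intg /small; have [->|x0] := eqVneq x 0; first by [].
rewrite /= -leNgt => h1 h2; split => //; apply/eqP; by rewrite eq_le h1 h2.
Qed.

Lemma cong_unit g c : intg g -> small (g - c) -> ~~ small c -> g != 0 /\ v g = 0.
Proof.
move=> hg hgc hc; apply: unit_v0 => //; apply: contra hc => hs.
by rewrite -(opprK c) -smallN -(addKr g (- c)) addrC smallB.
Qed.

Definition u1 x := (x != 0) && small (x - 1).

Lemma u1_1 : u1 1. Proof. by rewrite /u1 oner_eq0 subrr small0. Qed.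

Lemma u1_v0 x : u1 x -> v x = 0.
Proof.
case/andP=> x0 hs; have hi : intg x.
  by rewrite -(subrK 1 x); apply: intgD; [apply: small_intg|apply: intg1].
case: (unit_v0 hi _) => //; apply: contra small1 => sx.
by rewrite -(opprK 1) -smallN -(addKr x (-1)) addrC smallB.
Qed.

Lemma u1M x y : u1 x -> u1 y -> u1 (x * y).
Proof.
move=> hx hy; have [x0 sx] := andP hx; have [y0 sy] := andP hy.
rewrite /u1 mulf_neq0 //=.
have -> : x * y - 1 = x * (y - 1) + (x - 1) by ring.
apply: smallD => //; apply: smallMl => //.
by rewrite /intg (negPf x0) u1_v0.
Qed.

Lemma u1V x : u1 x -> u1 x^-1.
Proof.
move=> hx; have [x0 sx] := andP hx; rewrite /u1 invr_neq0 //=.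
have -> : x^-1 - 1 = - (x^-1 * (x - 1)) by field.
rewrite -smallN smallMl // /intg invr_eq0 (negPf x0) vV // u1_v0 //.
Qed.

Lemma u1Xn x n : u1 x -> u1 (x ^+ n).
Proof. by move=> hx; elim: n => [|n IH]; rewrite ?expr0 ?u1_1 // exprS u1M. Qed.

Lemma u1Xz x (n : int) : u1 x -> u1 (x ^ n).
Proof. by move=> hx; case: n => n; [exact: u1Xn | rewrite NegzE -exprnN; apply: u1V; apply: u1Xn]. Qed.

Lemma u1_ratio x y : y != 0 -> v y = 0 -> small (x - y) -> u1 (x / y).
Proof.
move=> y0 vy sxy; have hy : intg y^-1 by rewrite /intg vV // vy oppr0 lexx orbT.
have hs : small (x / y - 1).
  have -> : x / y - 1 = (x - y) * y^-1 by field.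
  exact: smallMr.
rewrite /u1 hs andbT; apply: contra small1 => /eqP h.
by rewrite smallN -(add0r (-1)) -h.
Qed.


Local Notation tg := (tame_gen v).

Lemma m1_neq0 : (-1 : L) != 0. Proof. by rewrite oppr_eq0 oner_neq0. Qed.

Lemma tg_neq0 a b : a != 0 -> b != 0 -> tg a b != 0.
Proof.
move=> a0 b0; rewrite /tame_gen !mulf_neq0 // expfz_neq0 //; exact: m1_neq0.
Qed.

Lemma tgMl a a' b : a != 0 -> a' != 0 -> b != 0 -> tg (a * a') b = tg a b * tg a' b.
Proof.
move=> a0 a'0 b0; rewrite /tame_gen vM // mulrDl (expfzDr _ _ m1_neq0) (@expfzMl L a a') opprD (expfzDr _ _ b0).
ring.
Qed.

Lemma tgMr a b b' : a != 0 -> b != 0 -> b' != 0 -> tg a (b * b') = tg a b * tg a b'.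
Proof.
move=> a0 b0 b'0; rewrite /tame_gen vM // mulrDr (expfzDr _ _ m1_neq0) (expfzDr _ _ a0) (@expfzMl L b b').
ring.
Qed.

Lemma tg_swap a b : a != 0 -> b != 0 -> tg a b * tg b a = 1.
Proof.
move=> a0 b0; rewrite /tame_gen (mulrC (v b)).
have e1 : (-1 : L) ^ (v a * v b) * (-1) ^ (v a * v b) = 1.
  by rewrite -(@expfzMl L) mulrNN mulr1 exp1rz.
have e2 : a ^ (v b) * a ^ (- v b) = 1 by rewrite -expfzDr // subrr.
have e3 : b ^ (v a) * b ^ (- v a) = 1 by rewrite -expfzDr // subrr.
transitivity (((-1 : L) ^ (v a * v b) * (-1) ^ (v a * v b)) * (a ^ (v b) * a ^ (- v b)) *
  (b ^ (v a) * b ^ (- v a))); first by ring.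
by rewrite e1 e2 e3 !mulr1.
Qed.

Lemma tg_unitl a b : v a = 0 -> tg a b = a ^ (v b).
Proof. by move=> va; rewrite /tame_gen va mul0r oppr0 !expr0z mul1r mulr1. Qed.

Lemma tg_unitr a b : v b = 0 -> tg a b = b ^ (- v a).
Proof. by move=> vb; rewrite /tame_gen vb mulr0 !expr0z !mul1r. Qed.

Lemma tg_self a : a != 0 -> tg a a = (-1) ^ (v a * v a).
Proof.
move=> a0; rewrite /tame_gen -mulrA -expfzDr // addrN expr0z mulr1 //.
Qed.


Section Roots.
Variables (N : nat) (z : L).
Hypothesis hz : N.-primitive_root z.

Lemma N_gt0 : (0 < N)%N. Proof. exact: prim_order_gt0 hz. Qed.

Lemma z_neq0 : z != 0.
Proof. by rewrite (prim_root_eq0 hz) -lt0n N_gt0. Qed.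

Lemma zX_neq0 (c : int) : z ^ c != 0.
Proof. exact: expfz_neq0 z_neq0. Qed.

Lemma v_z : v z = 0.
Proof.
have h : v (z ^+ N) = N%:Z * v z by rewrite vXn // z_neq0.
rewrite (prim_expr_order hz) v1 in h.
have := N_gt0; lia.
Qed.

Lemma v_zX c : v (z ^ c) = 0.
Proof. by rewrite vXz ?z_neq0 // v_z mulr0. Qed.

Lemma intg_zX c : intg (z ^ c).
Proof. by rewrite /intg v_zX lexx orbT. Qed.

Lemma zXD a b : z ^ (a + b) = z ^ a * z ^ b.
Proof. exact: expfzDr z_neq0. Qed.

Lemma zXM a b : z ^ (a * b) = (z ^ a) ^ b.
Proof. by rewrite exprz_exp. Qed.

Lemma zX_eq1 c : (z ^ c == 1) = (N %| `|c|)%N.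
Proof.
case: c => n; first by rewrite (prim_order_dvd hz).
rewrite NegzE -exprnN invr_eq1 (prim_order_dvd hz) //.
Qed.

Lemma zX_dvd c : (N%:Z %| c)%Z -> z ^ c = 1.
Proof. by rewrite dvdzE absz_nat -zX_eq1 => /eqP. Qed.

Definition xx (c : int) := 1 - z ^ c.

Lemma xx_neq0 c : ~~ (N%:Z %| c)%Z -> xx c != 0.
Proof. by rewrite dvdzE absz_nat -zX_eq1 /xx subr_eq0 eq_sym. Qed.

Lemma intg_xx c : intg (xx c).
Proof. by rewrite /xx intgB ?intg1 ?intg_zX. Qed.

Lemma zXN c : z ^ (- c) * z ^ c = 1.
Proof. by rewrite -zXD addNr expr0z. Qed.

Lemma xxN c : xx (- c) = - z ^ (- c) * xx c.
Proof.
rewrite /xx mulrBr mulr1 mulNr zXN; ring.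
Qed.

Lemma v_xxN c : xx c != 0 -> v (xx (- c)) = v (xx c).
Proof.
move=> h; rewrite xxN vM ?oppr_eq0 ?zX_neq0 // vN ?zX_neq0 // v_zX add0r //.
Qed.

Lemma small_pow y n : intg y -> small (1 - y) -> small (1 - y ^+ n).
Proof.
move=> hy hs; elim: n => [|n IH]; first by rewrite expr0 subrr small0.
have -> : 1 - y ^+ n.+1 = (1 - y ^+ n) + y ^+ n * (1 - y) by rewrite exprS; ring.
by rewrite smallD // smallMl // intgX.
Qed.

Lemma small_xxM a m : small (xx a) -> small (xx (a * m)).
Proof.
move=> h; rewrite /xx zXM; case: m => n; first exact: small_pow (intg_zX a) h.
rewrite NegzE -exprnN.
have hw : (z ^ a) ^+ n.+1 != 0 by rewrite expf_neq0 // zX_neq0.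
have -> : 1 - ((z ^ a) ^+ n.+1)^-1 = - (((z ^ a) ^+ n.+1)^-1 * (1 - (z ^ a) ^+ n.+1)).
  by field.
rewrite -smallN smallMl //; last exact: small_pow (intg_zX a) h.
by rewrite /intg; apply/orP; right; rewrite vV // vXn ?zX_neq0 // v_zX mulr0 oppr0.
Qed.

Lemma small_xxD a b : small (xx a) -> small (xx b) -> small (xx (a + b)).
Proof.
move=> ha hb; rewrite /xx zXD.
have -> : 1 - z ^ a * z ^ b = (1 - z ^ a) + z ^ a * (1 - z ^ b) by ring.
by rewrite smallD // smallMl // intg_zX.
Qed.

Lemma small_div q : small (xx 1) -> (q %| N)%N -> (1 < q)%N -> small q%:R.
Proof.
move=> h qN q1.
have pe := dvdn_prim_root hz qN.
set e := z ^+ (N %/ q) in pe.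
have e1 : e != 1.
  apply/eqP=> e1; have := prim_order_dvd pe 1; rewrite expr1 e1 eqxx.
  by rewrite dvdn1 => /eqP q1'; rewrite q1' in q1.
have hsum : \sum_(i < q) e ^+ i = 0.
  have := subrX1 e q; rewrite (prim_expr_order pe) subrr => /esym/eqP.
  by rewrite mulf_eq0 subr_eq0 (negPf e1) /= => /eqP.
have -> : (q%:R : L) = \sum_(i < q) (1 - e ^+ i).
  by rewrite sumrB hsum subr0 sumr_const card_ord.
apply: small_sum => i.
have -> : e ^+ i = z ^ (1 * ((N %/ q) * i)%N%:Z).
  by rewrite mul1r /e -exprM.
exact: small_xxM.
Qed.

Lemma two_primes p q : prime p -> prime q -> p != q -> (p %| N)%N -> (q %| N)%N ->
  ~~ small (xx 1).
Proof.
move=> pp pq pq' pN qN; apply/negP => h.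
have sp := small_div h pN (prime_gt1 pp).
have sq := small_div h qN (prime_gt1 pq).
have cop : gcdn p q = 1%N by apply/eqP; rewrite -/(coprime p q) prime_coprime // dvdn_prime2.
have [u [w]] := Bezoutz p q; rewrite /gcdz /= cop => huw.
have : small ((u * p%:Z + w * q%:Z)%:~R) by
  rewrite intrD !intrM smallD // smallMl ?intg_int.
by rewrite huw (negPf small1).
Qed.

Lemma fermat_int p s (u : int) : prime p -> ~~ (p%:Z %| u)%Z -> (p%:Z %| u ^+ (p ^ s - 1) - 1)%Z.
Proof.
move=> pp hu.
have chp := pchar_Fp pp.
set x : 'F_p := u%:~R.
have x0 : x != 0 by rewrite /x -(dvdz_pcharf chp).
have hX : forall t, x ^+ (p ^ t) = x.
  elim=> [|t IH]; first by rewrite expn0 expr1.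
  by rewrite expnSr exprM IH; have := expf_card x; rewrite card_Fp.
have h1 : x ^+ (p ^ s - 1) = 1.
  apply: (mulfI x0); rewrite mulr1 -exprS subn1 prednK ?hX // expn_gt0 prime_gt0 //.
rewrite (dvdz_pcharf chp) intrB rmorphXn /= -/x h1 subrr //.
Qed.

Lemma cong_pow g c n : intg g -> intg c -> small (g - c) -> small (g ^+ n - c ^+ n).
Proof.
move=> hg hc hs; elim: n => [|n IH]; first by rewrite !expr0 subrr small0.
have -> : g ^+ n.+1 - c ^+ n.+1 = g * (g ^+ n - c ^+ n) + c ^+ n * (g - c).
  by rewrite !exprS; ring.
by rewrite smallD // smallMl // intgX.
Qed.

Section Prime.
Variable p : nat.
Hypothesis pp : prime p.
Hypothesis sp : small p%:R.

Lemma small_int_dvd (m : int) : (p%:Z %| m)%Z -> small m%:~R.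
Proof. by case/dvdzP=> q ->; rewrite intrM smallMl ?intg_int. Qed.

Lemma notsmall_copr (u : int) : ~~ (p%:Z %| u)%Z -> ~~ small u%:~R.
Proof.
move=> hu; apply/negP=> su.
have cop : gcdz p u = 1.
  rewrite /gcdz absz_nat; congr Posz; apply/eqP.
  by rewrite -/(coprime p `|u|) prime_coprime // -{1}(absz_nat p) -dvdzE.
have [a [b]] := Bezoutz p u; rewrite cop => hab.
have : small ((a * p%:Z + b * u)%:~R) by rewrite intrD !intrM smallD // smallMl ?intg_int.
by rewrite hab (negPf small1).
Qed.

Lemma u1_fermat g (u : int) s : intg g -> small (g - u%:~R) -> ~~ (p%:Z %| u)%Z ->
  u1 (g ^+ (p ^ s - 1)).
Proof.
move=> hg hgu hu.
have [g0 _] := cong_unit hg hgu (notsmall_copr hu).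
rewrite /u1 expf_neq0 //=.
have -> : g ^+ (p ^ s - 1) - 1 = (g ^+ (p ^ s - 1) - (u%:~R) ^+ (p ^ s - 1)) +
   ((u ^+ (p ^ s - 1) - 1)%:~R) by rewrite intrB rmorphXn /=; ring.
by rewrite smallD ?cong_pow ?intg_int // small_int_dvd // fermat_int.
Qed.

End Prime.

Lemma geo y (u : int) : y != 0 -> v y = 0 -> small (1 - y) ->
  exists g, [/\ intg g, small (g - u%:~R) & 1 - y ^ u = (1 - y) * g].
Proof.
move=> y0 vy hs.
have hy : intg y by rewrite /intg vy lexx orbT.
have pos : forall n : nat, exists g, [/\ intg g, small (g - n%:R) & 1 - y ^+ n = (1 - y) * g].
  move=> n; exists (\sum_(i < n) y ^+ i); split.
  - by apply: intg_sum => i; apply: intgX.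
  - have -> : \sum_(i < n) y ^+ i - n%:R = \sum_(i < n) (y ^+ i - 1).
      by rewrite sumrB sumr_const card_ord.
    apply: small_sum => i; rewrite smallN opprB; exact: small_pow.
  - have := subrX1 y n => h.
    have -> : 1 - y ^+ n = - (y ^+ n - 1) by ring.
    by rewrite h; ring.
case: u => n; first by have [g [h1 h2 h3]] := pos n; exists g; split.
have [g [h1 h2 h3]] := pos n.+1.
set w := y ^+ n.+1.
have w0 : w != 0 by rewrite expf_neq0.
have vw : v w^-1 = 0 by rewrite vV // vXn // vy mulr0 oppr0.
have hwi : intg w^-1 by rewrite /intg vw lexx orbT.
exists (- w^-1 * g); split.
- by rewrite intgM // -intgN.
- rewrite NegzE mulrNz.
  have -> : - w^-1 * g - - (1 *~ n.+1%:Z) = - (w^-1 * (g - n.+1%:R)) - n.+1%:R * (w^-1 - 1).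
    rewrite -[1 *~ n.+1%:Z]/(n.+1%:~R) /intmul; field => //.
  apply: smallB; first by rewrite -smallN smallMl.
  apply: smallMl; first exact: intg_nat.
  have -> : w^-1 - 1 = w^-1 * (1 - w) by field.
  by rewrite smallMl // small_pow.
- rewrite NegzE -exprnN -/w.
  have -> : 1 - w^-1 = - w^-1 * (1 - w) by field.
  by rewrite h3; ring.
Qed.

Lemma vprod (I : Type) (r : seq I) (F : I -> L) : (forall i, F i != 0) ->
  v (\prod_(i <- r) F i) = \sum_(i <- r) v (F i).
Proof.
move=> h; elim: r => [|i r IH]; first by rewrite !big_nil v1.
rewrite !big_cons vM ?IH //; elim: r {IH} => [|j r IH']; rewrite ?big_nil ?oner_neq0 //.
by rewrite big_cons mulf_neq0.
Qed.

Lemma prod_factor (e y : L) q : q.-primitive_root e -> y != 0 ->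
  \prod_(i < q) (1 - y * e ^+ i) = 1 - y ^+ q.
Proof.
move=> pe y0.
have := congr1 (fun P => P.[y^-1]) (factor_Xn_sub_1 pe).
rewrite horner_prod hornerD hornerN hornerXn hornerC => h.
have -> : \prod_(i < q) (1 - y * e ^+ i) = \prod_(i < q) (y * (y^-1 - e ^+ i)).
  by apply: eq_bigr => i _; rewrite mulrBr mulfV.
rewrite big_split /= prodr_const card_ord.
rewrite big_mkord in h.
have -> : \prod_(i < q) (y^-1 - e ^+ i) = y^-1 ^+ q - 1.
  by rewrite -h; apply: eq_bigr => i _; rewrite hornerXsubC.
by rewrite mulrBr mulr1 -exprMn mulfV // expr1n.
Qed.

Section PR.
Variables (p r : nat).
Hypotheses (pp : prime p) (hN : N = (p ^ r)%N) (r0 : (0 < r)%N) (hs1 : small (xx 1)).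

Lemma pN : (p %| N)%N. Proof. by rewrite hN dvdn_exp. Qed.

Lemma sp : small p%:R. Proof. exact: small_div hs1 pN (prime_gt1 pp). Qed.

Lemma small_xxp s : small (xx (p ^ s)%:Z).
Proof. by have := small_xxM (p ^ s)%:Z hs1; rewrite mul1r. Qed.

Lemma ndvd_ps s : (s < r)%N -> ~~ (N%:Z %| (p ^ s)%:Z)%Z.
Proof.
by move=> sr; rewrite dvdzE !absz_nat hN dvdn_Pexp2l ?prime_gt1 // -ltnNge.
Qed.

Lemma xxp_neq0 s : (s < r)%N -> xx (p ^ s)%:Z != 0.
Proof. by move=> sr; apply: xx_neq0; exact: ndvd_ps. Qed.

Lemma geo_unit s (u : int) : (s < r)%N -> ~~ (p%:Z %| u)%Z ->
  exists g, [/\ g != 0, v g = 0, intg g, small (g - u%:~R) & xx ((p ^ s)%:Z * u) = xx (p ^ s)%:Z * g].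
Proof.
move=> sr hu.
have [g [hg hgu he]] := geo u (zX_neq0 (p ^ s)%:Z) (v_zX _) (small_xxp s).
have [g0 vg] := cong_unit hg hgu (notsmall_copr pp sp hu).
by exists g; split => //; rewrite /xx zXM -he.
Qed.

Lemma v_geo s (u : int) : (s < r)%N -> ~~ (p%:Z %| u)%Z ->
  xx ((p ^ s)%:Z * u) != 0 /\ v (xx ((p ^ s)%:Z * u)) = v (xx (p ^ s)%:Z).
Proof.
move=> sr hu; have [g [g0 vg _ _ ->]] := geo_unit sr hu.
by rewrite mulf_neq0 ?xxp_neq0 // vM ?xxp_neq0 // vg addr0.
Qed.

Lemma v_xxp s : (s < r)%N -> v (xx (p ^ s)%:Z) = (p ^ s)%:Z * v (xx 1).
Proof.
elim: s => [|s IH] sr; first by rewrite expn0 mul1r.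
have sr' : (s < r)%N by apply: ltnW.
set y := z ^ (p ^ s)%:Z.
have y0 : y != 0 by apply: zX_neq0.
have pe := dvdn_prim_root hz pN.
set e := z ^+ (N %/ p) in pe.
have hNp : (N %/ p = p ^ s * p ^ (r.-1 - s))%N.
  rewrite hN -expnD subnKC; last by rewrite -ltnS prednK.
  by rewrite -{1}(prednK r0) expnSr mulnK ?prime_gt0.
have ex1 : xx (p ^ s.+1)%:Z = 1 - y ^+ p.
  by rewrite /xx expnSr PoszM zXM.
have ex2 : forall i : 'I_p, 1 - y * e ^+ i =
    xx ((p ^ s)%:Z * (1 + i * p ^ (r.-1 - s))%N%:Z).
  move=> i; rewrite /xx /y /e -exprM (exprnP z (N %/ p * i)) -zXD; congr (1 - z ^ _).
  by rewrite hNp -PoszD -PoszM; congr Posz; ring.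
have hu : forall i : 'I_p, ~~ (p%:Z %| (1 + i * p ^ (r.-1 - s))%N%:Z)%Z.
  move=> i; have hd : (p %| i * p ^ (r.-1 - s))%N.
    by apply: dvdn_mull; apply: dvdn_exp => //; rewrite subn_gt0 -ltnS prednK.
  by rewrite dvdzE !absz_nat dvdn_addl // dvdn1 gtn_eqF ?prime_gt1.
rewrite ex1 -(prod_factor pe y0).
rewrite vprod; last by move=> i; rewrite ex2; case: (v_geo sr' (hu i)).
under eq_bigr => i _ do rewrite ex2 (proj2 (v_geo sr' (hu i))) IH //.
rewrite sumr_const card_ord -mulr_natl natz expnSr PoszM; ring.
Qed.

Lemma xx_decomp c : ~~ (N%:Z %| c)%Z ->
  exists s u, [/\ (s < r)%N, c = (p ^ s)%:Z * u & ~~ (p%:Z %| u)%Z].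
Proof.
move=> hc.
have c0 : c != 0 by apply: contra hc => /eqP ->; apply: dvdz0.
have n0 : (0 < `|c|)%N by rewrite absz_gt0.
have [m cop hm] := pfactor_coprime pp n0.
exists (logn p `|c|), (sgz c * m%:Z); split.
- rewrite ltnNge; apply: contra hc => rs.
  by rewrite dvdzE absz_nat hm hN dvdn_mull // dvdn_exp2l.
- rewrite {1}[c]intEsg {1}hm PoszM; ring.
- have sg1 : `|sgz c|%N = 1%N by move: c0; case: (intP c) => // n _; rewrite ?sgzN.
  by rewrite dvdzE absz_nat abszM sg1 mul1n absz_nat -prime_coprime.
Qed.


Lemma N_gt1 : (1 < N)%N.
Proof. by rewrite hN -{1}(expn0 p) ltn_exp2l ?prime_gt1. Qed.

Lemma X_neq0 : xx 1 != 0.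
Proof. by apply: xx_neq0; rewrite dvdzE !absz_nat dvdn1 gtn_eqF // N_gt1. Qed.

Lemma E_ge0 : 0 <= v (xx 1).
Proof. by have := intg_xx 1; rewrite /intg (negPf X_neq0). Qed.

Lemma dec_info c : ~~ (N%:Z %| c)%Z ->
  exists s u, [/\ (s < r)%N, c = (p ^ s)%:Z * u, ~~ (p%:Z %| u)%Z, xx c != 0 &
     v (xx c) = (p ^ s)%:Z * v (xx 1)].
Proof.
move=> hc; have [s [u [sr -> hu]]] := xx_decomp hc.
have [h1 h2] := v_geo sr hu.
by exists s, u; split => //; rewrite h2 v_xxp.
Qed.

Lemma dec0 (u : int) : ~~ (p%:Z %| u)%Z ->
  exists g, [/\ g != 0, v g = 0, intg g, small (g - u%:~R) & xx u = xx 1 * g].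
Proof.
move=> hu; have [g [h1 h2 h3 h4 h5]] := geo_unit r0 hu.
by exists g; split => //; move: h5; rewrite expn0 mul1r.
Qed.

Lemma u1_zX m : u1 (z ^ m).
Proof.
rewrite /u1 zX_neq0 /= smallN opprB.
by have := small_xxM m hs1; rewrite mul1r.
Qed.

Lemma u1_ferm_exp g (u : int) s (E : int) : 0 <= E -> intg g -> small (g - u%:~R) ->
  ~~ (p%:Z %| u)%Z -> u1 (g ^ ((p ^ s)%:Z * E - E)).
Proof.
move=> E0 hg hgu hu.
have h := u1_fermat pp sp s hg hgu hu.
have -> : (p ^ s)%:Z * E - E = (p ^ s - 1)%N%:Z * E.
  have ps : (0 < p ^ s)%N by rewrite expn_gt0 prime_gt0.
  have -> : (p ^ s - 1)%N%:Z = (p ^ s)%:Z - 1 by lia.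
  ring.
by rewrite -exprz_exp; apply: u1Xz.
Qed.

Lemma u1_opp x n : u1 (x ^ n) -> u1 (x ^ (- n)).
Proof. by rewrite -invr_expz; apply: u1V. Qed.

Lemma signEE (E : int) : 0 <= E -> (-1 : L) ^ (E * E) = (-1) ^ E.
Proof.
case: E => // e _; rewrite -PoszM -!exprnP -signr_odd oddM andbb signr_odd //.
Qed.

Lemma star a b : ~~ (N%:Z %| a)%Z -> ~~ (N%:Z %| b)%Z -> ~~ (small a%:~R && small b%:~R) ->
  u1 (tame_gen v (xx a) (xx 1) * tame_gen v (xx b) (xx (- a)) * tame_gen v (xx 1) (xx b)).
Proof.
move=> ha hb hab.
set X := xx 1; set E := v X.
have X0 : X != 0 := X_neq0.
have E0 : 0 <= E := E_ge0.
have [sa [ua [sar ea hua A0 vA]]] := dec_info ha.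
have [sb [ub [sbr eb hub B0 vB]]] := dec_info hb.
have mz0 : - z ^ (- a) != 0 by rewrite oppr_eq0 zX_neq0.
have vmz : v (- z ^ (- a)) = 0 by rewrite vN ?zX_neq0 // v_zX.
have hA' : xx (- a) = (- z ^ (- a)) * xx a by rewrite xxN.
have swap := tg_swap X0 B0.
case: sa sar ea vA => [|sa] sar ea vA.
-
  rewrite expn0 mul1r in ea; subst a.
  have [g [g0 vg hg hgu hA]] := dec0 hua.
  have Xg0 : X * g != 0 by rewrite mulf_neq0.
  rewrite hA' hA tgMl // tgMr // ?mulf_neq0 // tgMr // (tg_unitl _ vg) (tg_unitr _ vmz) (tg_unitr _ vg) -/X -/E.
  rewrite tg_self // vB.
  set beta := (p ^ sb)%:Z * E.
  have -> : (-1) ^ (E * E) * g ^ E * ((- z ^ (- ua)) ^ (- beta) * (tame_gen v (xx b) X * g ^ (- beta))) *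
      tame_gen v X (xx b) = ((-1) ^ (E * E) * (-1) ^ (- beta)) * (z ^ (- ua)) ^ (- beta) *
      (g ^ E * g ^ (- beta)) * (tame_gen v (xx b) X * tame_gen v X (xx b)).
    rewrite expNrz; ring.
  rewrite mulrC in swap; rewrite swap mulr1 signEE // -expfzDr ?m1_neq0 // -expfzDr //.
  have -> : E - beta = - ((p ^ sb)%:Z * E - E) by rewrite /beta; ring.
  apply: u1M; first apply: u1M.
  + apply: u1_opp; apply: (u1_ferm_exp (u := -1)) => //; first by rewrite -intgN intg1.
    * by rewrite mulrN1z subrr small0.
    * by rewrite dvdzE /= dvdn1 gtn_eqF ?prime_gt1.
  + rewrite exprz_exp; exact: u1_zX.
  + apply: u1_opp; exact: u1_ferm_exp E0 hg hgu hua.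
- (* p divides a, so b is prime to p *)
  case: sb sbr eb vB => [|sb] sbr eb vB; last first.
    exfalso; move/negP: hab; apply; apply/andP; split.
    + rewrite ea intrM smallMr ?intg_int // expnSr PoszM intrM smallMl ?intg_int //.
      by rewrite -[(p%:Z)%:~R]/(p%:R) sp.
    + rewrite eb intrM smallMr ?intg_int // expnSr PoszM intrM smallMl ?intg_int //.
      by rewrite -[(p%:Z)%:~R]/(p%:R) sp.
  rewrite expn0 mul1r in eb; subst b.
  have [h [h0 vh hh hhu hB]] := dec0 hub.
  have vA' : v (xx (- a)) = (p ^ sa.+1)%:Z * E by rewrite v_xxN // vA.
  have A'0 : xx (- a) != 0 by rewrite hA' mulf_neq0.
  rewrite hB -/X tgMl // (tg_unitl _ vh) vA' tgMr // (tg_unitr _ vh).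
  rewrite hA' tgMr // (tg_unitr _ vmz) tg_self // -/E.
  set alpha := (p ^ sa.+1)%:Z * E.
  have swapA := tg_swap A0 X0.
  have -> : tame_gen v (xx a) X * ((- z ^ (- a)) ^ (- E) * tame_gen v X (xx a) * h ^ alpha) *
      ((-1) ^ (E * E) * h ^ (- E)) = (tame_gen v (xx a) X * tame_gen v X (xx a)) *
      ((-1) ^ (E * E) * (-1) ^ (- E)) * (z ^ (- a)) ^ (- E) * (h ^ alpha * h ^ (- E)).
    rewrite expNrz; ring.
  rewrite swapA mul1r signEE // -expfzDr ?m1_neq0 // subrr expr0z mul1r -expfzDr //.
  apply: u1M; first by rewrite exprz_exp; exact: u1_zX.
  exact: u1_ferm_exp E0 hh hhu hub.
Qed.

End PR.

Section Chain.
Variables (b d : nat -> int) (k : nat).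
Hypothesis hd0 : d 0%N = 1.
Hypothesis hdet : forall i, (0 < i <= k)%N -> b i.-1 * d i - b i * d i.-1 = 1.
Hypothesis hnd : forall i, (i <= k)%N -> ~~ (N%:Z %| d i)%Z.

Local Notation tg := (tame_gen v).
Let P m := \prod_(0 <= i < m) tg (xx (d i.+1)) (xx (- d i)).

Lemma PS m : P m.+1 = P m * tg (xx (d m.+1)) (xx (- d m)).
Proof. by rewrite /P big_nat_recr. Qed.

Lemma xxd_neq0 i : (i <= k)%N -> xx (d i) != 0.
Proof. by move=> ik; apply: xx_neq0; apply: hnd. Qed.

Lemma xxNd_neq0 i : (i <= k)%N -> xx (- d i) != 0.
Proof. by move=> ik; rewrite xxN mulf_neq0 ?oppr_eq0 ?zX_neq0 ?xxd_neq0. Qed.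

Lemma det_int m : (m < k)%N -> (b m * d m.+1 - b m.+1 * d m)%:~R = 1 :> L.
Proof. by move=> mk; have /= -> := hdet (i := m.+1); rewrite ?mk. Qed.

Lemma lambda m : (m.+1 < k)%N ->
  d m.+2 + d m = d m.+1 * (b m * d m.+2 - b m.+2 * d m).
Proof.
move=> mk.
have h1 := hdet (i := m.+1); have h2 := hdet (i := m.+2); rewrite /= in h1 h2.
have e1 : b m * d m.+1 - b m.+1 * d m = 1 by apply: h1; lia.
have e2 : b m.+1 * d m.+2 - b m.+2 * d m.+1 = 1 by apply: h2; lia.
apply/eqP; rewrite -subr_eq0.
have -> : d m.+2 + d m - d m.+1 * (b m * d m.+2 - b m.+2 * d m) =
  - d m.+2 * (b m * d m.+1 - b m.+1 * d m - 1) - d m * (b m.+1 * d m.+2 - b m.+2 * d m.+1 - 1)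
  by ring.
by rewrite e1 e2 subrr !mulr0 oppr0 subrr.
Qed.

Lemma chainA : ~~ small (xx 1) -> ~~ small (xx (d k)) -> u1 (P k).
Proof.
move=> hX hk.
have nsv : forall i, (i <= k)%N -> ~~ small (xx (d i)) -> v (xx (d i)) = 0.
  by move=> i ik hs; case: (unit_v0 (intg_xx _) hs).
have nsvN : forall i, (i <= k)%N -> ~~ small (xx (d i)) -> v (xx (- d i)) = 0.
  by move=> i ik hs; rewrite v_xxN ?xxd_neq0 // nsv.
have nb : forall m, (m < k)%N -> ~~ (small (xx (d m)) && small (xx (d m.+1))).
  move=> m mk; apply/negP => /andP [s1 s2]; move/negP: hX; apply.
  have -> : (1 : int) = d m.+1 * b m + d m * (- b m.+1).
    have /= h := hdet (i := m.+1); rewrite -h; [ring | lia].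
  by apply: small_xxD; apply: small_xxM.
have vge : forall i, (i <= k)%N -> 0 <= v (xx (d i)).
  by move=> i ik; have := intg_xx (d i); rewrite /intg (negPf (xxd_neq0 ik)).
have sE : forall i, (i <= k)%N -> small (xx (d i)) = (0 < v (xx (d i))).
  by move=> i ik; rewrite smallE // xxd_neq0.
case Ek : k => [|k']; first by rewrite /P big_geq // u1_1.
suff inv : forall m, (m <= k')%N -> u1 (P m.+1 * xx (- d m) ^ (v (xx (d m.+1)))).
  by have := inv k' (leqnn _); rewrite -Ek (nsv k (leqnn k) hk) expr0z mulr1.
elim=> [|m IH] mk.
- rewrite PS /P big_geq // mul1r hd0.
  have v1' : v (xx (-1)) = 0 by rewrite v_xxN ?X_neq0 //; case: (unit_v0 (intg_xx 1) hX).
  have Xn0 : xx (-1) != 0 by rewrite xxN mulf_neq0 ?oppr_eq0 ?zX_neq0 //; case: (unit_v0 (intg_xx 1) hX).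
  by rewrite (tg_unitr _ v1') -expfzDr // addNr expr0z u1_1.
- have mk' : (m < k)%N by lia.
  have mk2 : (m.+1 < k)%N by lia.
  have hm0 : (m <= k)%N by lia.
  have hm1 : (m.+1 <= k)%N by lia.
  have hm2 : (m.+2 <= k)%N by lia.
  have IH' := IH (ltnW mk).
  rewrite PS.
  have [hs|hns] := boolP (small (xx (d m.+1))); last first.
    rewrite (tg_unitr _ (nsvN _ hm1 hns)) -mulrA -(expfzDr _ _ (xxNd_neq0 hm1)).
    by rewrite addNr expr0z mulr1; move: IH'; rewrite (nsv _ hm1 hns) expr0z mulr1.
  have ns2 : ~~ small (xx (d m.+2)).
    by have := nb m.+1 mk2; rewrite hs.
  have ns0 : ~~ small (xx (d m)).
    by have := nb m mk'; rewrite hs andbT.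
  rewrite (nsv m.+2 hm2 ns2) expr0z mulr1 (tg_unitl _ (nsv _ hm2 ns2)) v_xxN ?(xxd_neq0 hm1) //.
  set e := v (xx (d m.+1)).
  have y0 : xx (- d m) != 0 by apply: xxNd_neq0.
  have vy : v (xx (- d m)) = 0 by apply: nsvN.
  have -> : P m.+1 * xx (d m.+2) ^ e =
    (P m.+1 * xx (- d m) ^ e) * (xx (d m.+2) / xx (- d m)) ^ e.
    have hy1 : xx (- d m) ^ e * xx (- d m) ^ (- e) = 1 by rewrite -expfzDr // subrr.
    rewrite expfzMl exprz_inv.
    transitivity (P m.+1 * xx (d m.+2) ^ e * (xx (- d m) ^ e * xx (- d m) ^ (- e))).
      by rewrite hy1 mulr1.
    by ring.
  apply: u1M => //; apply: u1Xz; apply: u1_ratio => //.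
  have -> : xx (d m.+2) - xx (- d m) = z ^ (- d m) * xx (d m.+1 * (b m * d m.+2 - b m.+2 * d m)).
    rewrite -lambda // /xx zXD.
    transitivity (z ^ (- d m) - z ^ (d m.+2) * (z ^ (- d m) * z ^ (d m))).
      by rewrite zXN mulr1; ring.
    by ring.
  by rewrite smallMl ?intg_zX // small_xxM.
Qed.

Lemma chainC p r : prime p -> N = (p ^ r)%N -> (0 < r)%N -> small (xx 1) ->
  xx (d k) = xx 1 -> u1 (P k).
Proof.
move=> pp hN r0 hs1 hdk.
set X := xx 1.
have X0 : X != 0 := X_neq0 pp hN r0.
have TT : tg X X * tg X X = 1.
  by rewrite tg_self // -expfzMl mulrNN mulr1 exp1rz.
suff inv : forall m, (m <= k)%N -> u1 (P m * tg X X * tg X (xx (d m))).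
  by have := inv k (leqnn _); rewrite hdk -/X -mulrA TT mulr1.
elim=> [|m IH] mk.
- by rewrite /P big_geq // mul1r hd0 -/X TT u1_1.
- have mk' : (m <= k)%N by apply: ltnW.
  have A0 := xxd_neq0 mk'.
  have -> : P m.+1 * tg X X * tg X (xx (d m.+1)) =
     (P m * tg X X * tg X (xx (d m))) *
     (tg (xx (d m)) X * tg (xx (d m.+1)) (xx (- d m)) * tg X (xx (d m.+1))).
    rewrite PS; have := tg_swap X0 A0 => sw.
    transitivity (P m * tg X X * (tg X (xx (d m)) * tg (xx (d m)) X) *
       tg (xx (d m.+1)) (xx (- d m)) * tg X (xx (d m.+1))); first by rewrite sw mulr1; ring.
    by ring.
  apply: u1M; first exact: IH.
  apply: (star pp hN r0 hs1); [exact: hnd | exact: hnd |].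
  apply/negP => /andP [s1 s2]; move/negP: small1; apply.
  by rewrite -(det_int mk) intrB !intrM smallB // smallMl ?intg_int.
Qed.

End Chain.
End Roots.
End Val.

Lemma fcoef_cat (L : fieldType) (s1 s2 : fsum L) a b :
  fcoef (s1 ++ s2) a b = fcoef s1 a b + fcoef s2 a b.
Proof. by rewrite /fcoef big_cat. Qed.

Lemma fcoef_scale (L : fieldType) k (s : fsum L) a b : fcoef (fscale k s) a b = k * fcoef s a b.
Proof. by rewrite /fcoef /fscale big_map mulr_sumr. Qed.

Lemma K2O_mod (L : fieldType) (z : L) t : in_K2O t -> in_K2O_mod z t.
Proof.
move=> h; exists t, 0; split => //; exists [::]; split => // a b.
rewrite fcoef_cat fcoef_scale fcoef_cat /fcoef /= !big_cons !big_nil.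
by case: ifP => _; rewrite ?mul0r ?addr0 ?mulN1r ?subrr.
Qed.

Lemma theta_K2O (L : fieldType) (N : nat) (z : L) (a b c d : int) (s : seq (int * int)) :
  (2 <= N)%N -> N.-primitive_root z -> in_tGamma0 N a b c d -> connecting_seq N a b c d s ->
  (forall v, is_dval v -> small v (xx z 1) -> exists p r,
     [/\ prime p, N = (p ^ r)%N, (0 < r)%N & xx z ((a * d - b * c) * d) = xx z 1]) ->
  in_K2O_mod z (theta_fsum z s).
Proof.
move=> N2 hz [hdt hNc] [k [hsz [h0 [hk [hdet hnd]]]]] hC.
set det := a * d - b * c in hdt hk hC.
set bb := fun i => (nth (0, 0) s i).1.
set dd := fun i => (nth (0, 0) s i).2.
have hd0 : dd 0%N = 1 by rewrite /dd h0.
have hdet' : forall i, (0 < i <= k)%N -> bb i.-1 * dd i - bb i * dd i.-1 = 1 by [].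
have det2 : det * det = 1 by case: hdt => ->.
have hndk : ~~ (N%:Z %| det * d)%Z.
  apply/negP => hN.
  have hNd : (N%:Z %| d)%Z.
    by have := dvdz_mull det hN; rewrite mulrA det2 mul1r.
  have : (N%:Z %| det)%Z.
    by rewrite /det rpredB // ?dvdz_mull // dvdz_mulr.
  move=> /(dvdz_mull det); rewrite det2 dvdzE absz_nat dvdn1 => /eqP N1.
  by rewrite N1 in N2.
have hnd' : forall i, (i <= k)%N -> ~~ (N%:Z %| dd i)%Z.
  move=> i; rewrite leq_eqVlt => /orP [/eqP ->|ik]; last exact: hnd.
  by rewrite /dd hk.
have ddk : dd k = det * d by rewrite /dd hk.
have hzs : size (zip s (behead s)) = k.
  by rewrite size_zip size_behead hsz /=; apply/minn_idPr.
have hprod : forall v, tame_fsum v (theta_fsum z s) =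
    \prod_(0 <= i < k) tame_gen v (xx z (dd i.+1)) (xx z (- dd i)).
  move=> v; rewrite /tame_fsum /theta_fsum big_map.
  rewrite (big_nth ((0, 0), (0, 0))) hzs.
  apply: eq_big_nat => i /andP [_ ik].
  rewrite nth_zip_cond hzs ik /= nth_behead.
  by rewrite expr1z.
have hwf : fsum_wf (theta_fsum z s).
  apply/allP => e /mapP [[p1 p2] hin ->] /=.
  have [i ilt hi] := (nthP ((0, 0), (0, 0))) hin.
  move: ilt hi; rewrite hzs => ik.
  rewrite nth_zip_cond hzs ik /= nth_behead.
  case=> <- <-.
  have := xx_neq0 hz (hnd' i.+1 ik); have := xxNd_neq0 hz hnd' (ltnW ik).
  rewrite /xx /dd => -> ->; by [].
apply: K2O_mod; split => // v hv.
have hu : u1 v (tame_fsum v (theta_fsum z s)).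
  rewrite hprod.
  have [hs|hns] := boolP (small v (xx z 1)).
    have [p [r [pp hN r0 hdk]]] := hC v hv hs.
    by apply: (chainC hv hz hd0 hdet' hnd' pp hN r0 hs); rewrite ddk.
  apply: (chainA hv hz hd0 hdet' hnd' hns).
  apply/negP => hsk; move/negP: hns; apply.
  have := small_xxM hv hz a hsk.
  suff -> : xx z (dd k * a) = xx z 1 by [].
  rewrite /xx ddk.
  have -> : det * d * a = 1 + det * b * c.
    have -> : det * d * a = det * (det + b * c) by rewrite /det; ring.
    by rewrite mulrDr det2 mulrA.
  by rewrite (zXD hz) (zX_dvd hz (c := det * b * c)) ?mulr1 // dvdz_mull.
by move: hu; rewrite /tame_trivial /u1 => /andP [_]; rewrite /small subr_eq0 => ->.
Qed.

Unset Implicit Arguments.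

Theorem mainTheorem10 (N : nat) (L : fieldExtType rat) (z : L) :
  (2 <= N)%N -> N.-primitive_root z -> <<1%VS; z>>%VS = fullv ->
  ((exists p q : nat, [/\ prime p, prime q, p != q, (p %| N)%N & (q %| N)%N]) ->
     forall (a b c d : int) (s : seq (int * int)),
       in_tGamma0 N a b c d -> connecting_seq N a b c d s ->
       in_K2O_mod z (theta_fsum z s))
  /\
  ((exists p k : nat, prime p /\ N = (p ^ k)%N) ->
     forall (a b c d : int) (s : seq (int * int)),
       in_Gamma1 N a b c d -> connecting_seq N a b c d s ->
       in_K2O_mod z (theta_fsum z s)).
Proof.
move=> N2 hz _; split.
- move=> [p [q [pp pq pq' pN qN]]] a b c d s hG hs.
  apply: (theta_K2O N2 hz hG hs) => v hv hsm; exfalso.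
  by have := two_primes hv hz pp pq pq' pN qN; rewrite hsm.
- move=> [p [r [pp hN]]] a b c d s [hdt [hNc hNd]] hs.
  have hG : in_tGamma0 N a b c d by split => //; left.
  apply: (theta_K2O N2 hz hG hs) => v hv hsm.
  exists p, r; split => //.
    by case: r hN => // hN; rewrite hN expn0 in N2.
  rewrite hdt mul1r /xx.
  have -> : d = 1 + (d - 1) by ring.
  by rewrite (zXD hz) (zX_dvd hz hNd) mulr1.
Qed.
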